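(* For every integer $n\ge1$ and every $u\in V$, $\Pr(E_{2u})<\dfrac{9}{2\ln(n+1)}$.
   Context: For an integer $n\ge1$, the $n$-octahedral graph $G'_n=(V,E')$ is the undirected graph with vertex set $V=\{u\in\mathbb{Z}^3:|u_1|+|u_2|+|u_3|=n\}$ and edge set $E'=\{\{v,w\}\subset V: v\neq w,\ |v_i-w_i|\le 1 \text{ for all } i=1,2,3\}$. For $u,v\in V$, $d_{uv}$ denotes the shortest-path distance in $G'_n$, and $Z_u=\left(\sum_{w\in V\setminus\{u\}} d_{uw}^{-2}\right)^{-1}$. The OSW random graph $G_n=(V,E)$ is the directed graph in which, for every $\{u,v\}\in E'$, both $(u,v),(v,u)\in E$, and in addition each vertex $u\in V$, independently of the others, chooses one vertex $v\in V\setminus\{u\}$ with probability $Z_u d_{uv}^{-2}$ and the long-range edge $(u,v)$ is added; $C_{uv}$ denotes the event that $u$ chooses $v$. For an ordered pair $(x,y)$ of distinct vertices, say $(x,y)$ is of type $s$ if $\{x,y\}\in E'$, and of type $w$ if $d_{xy}\ge2$ and $C_{xy}$ occurs. A C3 rooted at $u$ of type $(t_1,t_2,t_3)\in\{s,w\}^3$ is a triple $(u,a,b)$ of pairwise distinct vertices such that $(u,a)$ is of type $t_1$, $(a,b)$ is of type $t_2$ and $(b,u)$ is of type $t_3$. $E_{2u}$ is the event that there exists a C3 rooted at $u$ of type $(s,w,s)$. *)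

(* Defs.v *)
From Stdlib Require Import ZArith Reals.
From HB Require Import structures.
From mathcomp Require Import all_boot all_order all_algebra.

Set Implicit Arguments.
Unset Strict Implicit.
Unset Printing Implicit Defensive.

Import Order.TTheory GRing.Theory Num.Theory.

Local Open Scope ring_scope.

(* Points of Z^3 with coordinates in [-n, n], encoded by ordinals < 2n+1. *)
Definition pt (n : nat) := ('I_(n.*2.+1) * 'I_(n.*2.+1) * 'I_(n.*2.+1))%type.

Definition cd (n : nat) (i : 'I_(n.*2.+1)) : int := (nat_of_ord i)%:Z - n%:Z.

Definition onV (n : nat) (p : pt n) : bool :=
  `|cd p.1.1| + `|cd p.1.2| + `|cd p.2| == n%:Z.

Definition V (n : nat) := {p : pt n | onV p}.


Definition c1 n (v : V n) : int := cd (val v).1.1.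
Definition c2 n (v : V n) : int := cd (val v).1.2.
Definition c3 n (v : V n) : int := cd (val v).2.

Definition adj n (v w : V n) : bool :=
  (v != w) && [&& `|c1 v - c1 w| <= 1, `|c2 v - c2 w| <= 1 & `|c3 v - c3 w| <= 1].

Fixpoint reach n (k : nat) (v w : V n) : bool :=
  match k with
  | 0 => v == w
  | k'.+1 => [exists x, adj v x && reach k' x w]
  end.

(* shortest-path distance d_{vw}: least k with a walk of length k
   (G'_n is connected, so this least k is < #|V n|). *)
Definition dist n (v w : V n) : nat :=
  find (fun k => reach k v w) (iota 0 #|{: V n}|).

Definition Zc n (u : V n) : rat :=
  (\sum_(w : V n | w != u) ((dist u w)%:R ^- 2))^-1.

(* probability that u chooses v as long-range contact *)
Definition wgt n (u v : V n) : rat :=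
  if v == u then 0 else Zc u / ((dist u v)%:R ^+ 2).

(* An outcome of the random choices: f u = the vertex chosen by u
   (the event C_{uv} is f u = v).  Its probability is the product
   \prod_x wgt x (f x) (independent choices). *)
Definition outcome_prob n (f : {ffun V n -> V n}) : rat :=
  \prod_(x : V n) wgt x (f x).

Definition E2 n (u : V n) (f : {ffun V n -> V n}) : bool :=
  [exists a : V n, exists b : V n,
    [&& a != u, b != u, a != b,
        adj u a,
        (2 <= dist a b)%N && (f a == b) &
        adj b u]].

Definition PrE2 n (u : V n) : rat :=
  \sum_(f : {ffun V n -> V n} | E2 u f) outcome_prob f.

Definition int2Z (z : int) : Z :=
  match z with
  | Posz k => Z.of_nat k
  | Negz k => Z.opp (Z.of_nat k.+1)
  end.

Definition rat2R (q : rat) : R :=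
  Rdiv (IZR (int2Z (numq q))) (IZR (int2Z (denq q))).

(* Main.v *)
Require Import Defs.
From Stdlib Require Import ZArith Reals Lra Lia.

Local Open Scope R_scope.

Fixpoint TR (m : nat) : R :=
  match m with
  | O => 0
  | S k => TR k + INR (k + 2) / (INR (k + 1) * INR (k + 1))
  end.

Lemma ln1p_lt (x : R) : 0 < x -> ln (1 + x) < x.
Proof.
intros hx. rewrite <- (ln_exp x) at 2.
apply ln_increasing; [lra|]. apply exp_ineq1. lra.
Qed.

Lemma ln4_lt2 : ln 4 < 2.
Proof.
rewrite <- (ln_exp 2). apply ln_increasing; [lra|].
replace 2 with (1 + 1) by lra. rewrite exp_plus.
assert (h := exp_ineq1 1 ltac:(lra)).
nra.
Qed.

Lemma TR_ln (m : nat) : (1 <= m)%nat -> ln (3 * INR m + 1) < TR m.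
Proof.
induction m as [|m IH]; intros hm; [lia|].
destruct m as [|m'].
- simpl. replace (3 * 1 + 1) with 4 by lra.
  replace (0 + (1 + 1) / (1 * 1)) with 2 by lra. exact ln4_lt2.
- set (k := S m') in *.
  assert (IH' := IH ltac:(unfold k; lia)).
  assert (hk : 1 <= INR k) by (unfold k; rewrite S_INR; pose proof (pos_INR m'); lra).
  change (TR (S k)) with (TR k + INR (k + 2) / (INR (k + 1) * INR (k + 1))).
  rewrite !plus_INR, S_INR. simpl (INR 2). simpl (INR 1).
  assert (e : 3 * (INR k + 1) + 1 = (3 * INR k + 1) * (1 + 3 / (3 * INR k + 1))).
  { field. lra. }
  rewrite e, ln_mult; [| lra |].
  2:{ assert (0 < 3 / (3 * INR k + 1)) by (apply Rdiv_lt_0_compat; lra). lra. }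
  assert (h1 := ln1p_lt (3 / (3 * INR k + 1)) ltac:(apply Rdiv_lt_0_compat; lra)).
  assert (h2 : 3 / (3 * INR k + 1) <= (INR k + 2) / ((INR k + 1) * (INR k + 1))).
  { apply Rmult_le_reg_r with ((3 * INR k + 1) * ((INR k + 1) * (INR k + 1))).
    - apply Rmult_lt_0_compat; nra.
    - field_simplify; [nra | nra | lra]. }
  lra.
Qed.

From HB Require Import structures.
From mathcomp Require Import all_boot all_order all_algebra zify.
From mathcomp Require Import Rstruct.
Set Implicit Arguments. Unset Strict Implicit. Unset Printing Implicit Defensive.
Import Order.TTheory GRing.Theory Num.Theory.
Local Open Scope ring_scope.
Notation c1 := Defs.c1.
Notation c2 := Defs.c2.
Notation c3 := Defs.c3.
Notation dist := Defs.dist.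

Lemma cd_range n (i : 'I_(n.*2.+1)) : `|cd i| <= n%:Z.
Proof. rewrite /cd; have := ltn_ord i; lia. Qed.

Lemma cd_inj n : injective (@cd n).
Proof. move=> i j; rewrite /cd => h; apply/val_inj => /=; lia. Qed.

Lemma V_ext n (v w : V n) : c1 v = c1 w -> c2 v = c2 w -> c3 v = c3 w -> v = w.
Proof.
destruct v as [[[a b] c] hv]; destruct w as [[[a' b'] c'] hw]; rewrite /Defs.c1 /Defs.c2 /Defs.c3 /=.
move=> h1 h2 h3; apply cd_inj in h1; apply cd_inj in h2; apply cd_inj in h3.
by subst; congr exist; apply: bool_irrelevance.
Qed.

Lemma V_sum n (v : V n) : `|c1 v| + `|c2 v| + `|c3 v| = n%:Z.
Proof. by case: v => p hp; apply/eqP. Qed.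

Definition mko n (x : int) : 'I_(n.*2.+1) := inord (absz (x + n%:Z)).

Lemma mkoK n (x : int) : `|x| <= n%:Z -> cd (mko n x) = x.
Proof.
move=> hx; rewrite /cd /mko inordK; last by lia.
lia.
Qed.

Definition mk n (a : V n) (x y z : int) : V n :=
  insubd a ((mko n x, mko n y, mko n z) : pt n).

Lemma mk_c n (a : V n) x y z : `|x| + `|y| + `|z| = n%:Z ->
  [/\ c1 (mk a x y z) = x, c2 (mk a x y z) = y & c3 (mk a x y z) = z].
Proof.
move=> h.
have hx : `|x| <= n%:Z by lia.
have hy : `|y| <= n%:Z by lia.
have hz : `|z| <= n%:Z by lia.
have ho : onV ((mko n x, mko n y, mko n z) : pt n).
  by rewrite /onV /= !mkoK // h.
by rewrite /c1 /c2 /c3 /mk insubdK //= !mkoK.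
Qed.

Lemma adj_sym n (v w : V n) : adj v w = adj w v.
Proof.
rewrite /adj eq_sym; congr (_ && _).
by rewrite (distrC (c1 v)) (distrC (c2 v)) (distrC (c3 v)).
Qed.

Lemma reach_snoc n k (v w x : V n) : reach k v w -> adj w x -> reach k.+1 v x.
Proof.
elim: k v => [|k IH] v /=.
  by move=> /eqP -> h; apply/existsP; exists x; rewrite h eqxx.
move=> /existsP [y /andP [hy hr]] hw.
apply/existsP; exists y; rewrite hy /=; exact: IH hr hw.
Qed.

Lemma d_le n k (v w : V n) : reach k v w -> (k < #|{: V n}|)%N -> (dist v w <= k)%N.
Proof.
move=> hr hk; rewrite /dist; set s := iota _ _.
rewrite leqNgt; apply/negP => hlt.
have := before_find 0%N hlt; rewrite nth_iota // add0n hr //.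
Qed.

Lemma d_reach n (v w : V n) : (dist v w < #|{: V n}|)%N -> reach (dist v w) v w.
Proof.
rewrite /dist => h.
have hs : has (fun k => reach k v w) (iota 0 #|{: V n}|).
  by rewrite has_find size_iota.
by have := nth_find 0%N hs; rewrite nth_iota ?add0n // -(size_iota 0 #|{: V n}|) -has_find.
Qed.

Lemma d_pos n (v w : V n) : v != w -> (0 < dist v w)%N.
Proof.
move=> hvw; rewrite lt0n; apply/negP => /eqP h0.
have hc : (0 < #|{: V n}|)%N by apply/card_gt0P; exists v.
have := d_reach (v:=v) (w:=w); rewrite h0 hc /= => /(_ isT) /eqP h.
by rewrite h eqxx in hvw.
Qed.

Lemma d_adj n (v w : V n) : adj v w -> (dist v w <= 1)%N.
Proof.
move=> h; apply: d_le.
  by apply/existsP; exists w; rewrite h /=.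
apply/card_gt1P; exists v, w; split => //; by case/andP: h.
Qed.

Lemma d_ge2 n (v w : V n) : v != w -> ~~ adj v w -> (2 <= dist v w)%N.
Proof.
move=> hne hna.
have hc : (1 < #|{: V n}|)%N by apply/card_gt1P; exists v, w.
have hp := d_pos hne.
case: (ltnP (dist v w) #|{: V n}|) => hd; last by apply: leq_trans hd.
rewrite ltn_neqAle hp andbT; apply/negP => /eqP h1.
have := d_reach hd; rewrite -h1 /= => /existsP [x /andP [hx /eqP hxw]].
by rewrite -hxw hx in hna.
Qed.

Lemma exists_other n (hn : (1 <= n)%N) (x : V n) : exists w : V n, w != x.
Proof.
have hs := V_sum x.
have h : `|- c1 x| + `|- c2 x| + `|- c3 x| = n%:Z by rewrite !normrN.
case: (mk_c x h) => h1 h2 h3.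
exists (mk x (- c1 x) (- c2 x) (- c3 x)); apply/negP => /eqP he.
rewrite he in h1 h2 h3; lia.
Qed.

Lemma invd_gt0 n (x w : V n) : w != x -> 0 < ((dist x w)%:R : rat) ^- 2.
Proof.
move=> h; rewrite invr_gt0 exprn_gt0 // ltr0n; rewrite eq_sym in h; exact: (d_pos h).
Qed.

Lemma sumd_gt0 n (hn : (1 <= n)%N) (x : V n) :
  0 < \sum_(w : V n | w != x) ((dist x w)%:R : rat) ^- 2.
Proof.
case: (exists_other hn x) => w hw.
rewrite (bigD1 w) //=.
apply: (@lt_le_trans _ _ (((dist x w)%:R : rat) ^- 2)); first exact: invd_gt0.
rewrite lerDl; apply: sumr_ge0 => v /andP [hv _]; exact/ltW/invd_gt0.
Qed.

Lemma Zc_ge0 n (x : V n) : 0 <= Zc x.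
Proof.
rewrite /Zc invr_ge0; apply: sumr_ge0 => v hv; exact/ltW/invd_gt0.
Qed.

Lemma wgt_ge0 n (x v : V n) : 0 <= wgt x v.
Proof.
rewrite /wgt; case: eqP => // _; apply: divr_ge0; first exact: Zc_ge0.
exact: exprn_ge0.
Qed.

Lemma rowsum n (hn : (1 <= n)%N) (x : V n) : \sum_(v : V n) wgt x v = 1.
Proof.
rewrite (bigD1 x) //= /wgt eqxx add0r.
rewrite (eq_bigr (fun v => Zc x * ((dist x v)%:R ^- 2))); last first.
  by move=> v hv; rewrite (negbTE hv).
rewrite -mulr_sumr /Zc mulVf //.
by have := sumd_gt0 hn x; rewrite lt0r => /andP [].
Qed.

Lemma prob_fixed n (hn : (1 <= n)%N) (a b : V n) :
  \sum_(f : {ffun V n -> V n} | f a == b) outcome_prob f = wgt a b.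
Proof.
pose G (x v : V n) : rat := if x == a then (if v == b then wgt x v else 0) else wgt x v.
have e1 : \sum_(f : {ffun V n -> V n} | f a == b) outcome_prob f =
          \sum_(f : {ffun V n -> V n}) \prod_(x : V n) G x (f x).
  rewrite big_mkcond /=; apply: eq_bigr => f _.
  rewrite [in RHS](bigD1 a) //= /G eqxx.
  rewrite [X in _ = _ * X](eq_bigr (fun x => wgt x (f x))); last by move=> x hx; rewrite (negbTE hx).
  rewrite /outcome_prob (bigD1 a) //=.
  by case: eqP => //; rewrite mul0r.
rewrite e1 -(bigA_distr_bigA (fun x v => G x v)) /= [LHS](bigD1 a) //=.
rewrite [X in _ * X = _]big1.
  rewrite mulr1 (bigD1 b) //= /G !eqxx big1 ?addr0 // => v hv.
  by rewrite (negbTE hv).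
move=> x hx; rewrite /G (negbTE hx); exact: rowsum.
Qed.

Lemma prob_total n (hn : (1 <= n)%N) :
  \sum_(f : {ffun V n -> V n}) outcome_prob f = 1.
Proof.
rewrite /outcome_prob -(bigA_distr_bigA (fun x v => wgt x v)) /=.
by apply: big1 => x _; apply: rowsum.
Qed.

Lemma outcome_ge0 n (f : {ffun V n -> V n}) : 0 <= outcome_prob f.
Proof. apply: prodr_ge0 => x _; exact: wgt_ge0. Qed.

Definition Pairs n (u : V n) (p : V n * V n) : bool :=
  [&& adj u p.1, adj p.2 u, p.1 != p.2 & ~~ adj p.1 p.2].

Lemma union_bound n (hn : (1 <= n)%N) (u : V n) :
  PrE2 u <= \sum_(p | Pairs u p) wgt p.1 p.2.
Proof.
rewrite /PrE2.
apply: (@le_trans _ _ (\sum_(f : {ffun V n -> V n} | E2 u f)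
    \sum_(p | Pairs u p && (f p.1 == p.2)) outcome_prob f)).
  apply: ler_sum => f /existsP [a /existsP [b hab]].
  case/and3P: hab => hau hbu /and4P [hne hua /andP [hd hf] hbu'].
  have hp : Pairs u (a, b) && (f (a, b).1 == (a, b).2).
    rewrite /Pairs /= hua hbu' hne hf /= andbT.
    apply/negP => hadj; have := d_adj hadj; by case: (dist a b) hd => [|[|]].
  rewrite (bigD1 (a, b)) //= lerDl; apply: sumr_ge0 => p _; exact: outcome_ge0.
apply: (@le_trans _ _ (\sum_(f : {ffun V n -> V n})
    \sum_(p | Pairs u p && (f p.1 == p.2)) outcome_prob f)).
  rewrite [X in _ <= X](bigID (fun f => E2 u f)) /= lerDl.
  apply: sumr_ge0 => f _; apply: sumr_ge0 => p _; exact: outcome_ge0.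
rewrite (eq_bigr (fun f : {ffun V n -> V n} => \sum_(p | Pairs u p) (if f p.1 == p.2 then outcome_prob f else 0))); last first.
  by move=> f _; rewrite big_mkcondr.
rewrite exchange_big /=; apply: ler_sum => p _.
by rewrite -big_mkcond /= prob_fixed.
Qed.

Definition tri := [:: -1; 0; 1] : seq int.
Definition Dl : seq (int * int * int) :=
  [seq (xy, z) | xy <- [seq (x, y) | x <- tri, y <- tri], z <- tri].
Definition cf (s d : int) : int := if s == 0 then `|d| else s * d.
Definition good (s : int * int * int) (d : int * int * int) : bool :=
  (d != (0,0,0)) && (cf s.1.1 d.1.1 + cf s.1.2 d.1.2 + cf s.2 d.2 == 0).
Definition opp (d e : int * int * int) : bool :=
  ((d.1.1 != 0) && (d.1.1 == - e.1.1)) || ((d.1.2 != 0) && (d.1.2 == - e.1.2))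
  || ((d.2 != 0) && (d.2 == - e.2)).
Definition GP s := [seq p <- [seq (d, e) | d <- Dl, e <- Dl] |
   [&& good s p.1, good s p.2 & opp p.1 p.2]].
Lemma GP_size : all (fun s => size (GP s) <= 18)%N Dl.
Proof. vm_compute. reflexivity. Qed.

Lemma mem_tri (x : int) : `|x| <= 1 -> x \in tri.
Proof.
move=> h; have : (x = -1) \/ (x = 0) \/ (x = 1) by lia.
by case=> [->|[->|->]].
Qed.

Lemma mem_Dl x y z : x \in tri -> y \in tri -> z \in tri -> (x, y, z) \in Dl.
Proof.
move=> hx hy hz; apply: (allpairs_f (fun xy z => (xy, z))) => //.
exact: (allpairs_f (fun x y => (x, y))).
Qed.

Definition sg (x : int) : int := if 0 < x then 1 else if x < 0 then -1 else 0.

Lemma sg_tri x : `|sg x| <= 1.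
Proof. rewrite /sg; case: ifP => _ //; case: ifP => _ //. Qed.

Lemma cfE (x d : int) : `|d| <= 1 -> `|x + d| = `|x| + cf (sg x) d.
Proof.
move=> hd; rewrite /cf /sg.
case: (ltrgt0P x) => hx /=.
- rewrite mul1r; lia.
- lia.
- rewrite hx; lia.
Qed.

Definition delta n (u a : V n) : int * int * int := (c1 a - c1 u, c2 a - c2 u, c3 a - c3 u).
Definition sgu n (u : V n) : int * int * int := (sg (c1 u), sg (c2 u), sg (c3 u)).

Lemma delta_inj n (u a b : V n) : delta u a = delta u b -> a = b.
Proof.
case=> h1 h2 h3; apply: V_ext; lia.
Qed.

Lemma adj_coords n (v w : V n) : adj v w ->
  [/\ v != w, `|c1 v - c1 w| <= 1, `|c2 v - c2 w| <= 1 & `|c3 v - c3 w| <= 1].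
Proof. by case/andP => h /and3P [h1 h2 h3]. Qed.

Lemma good_delta n (u a : V n) : adj u a -> good (sgu u) (delta u a).
Proof.
case/adj_coords => hne h1 h2 h3.
apply/andP; split.
  apply/negP => /eqP [e1 e2 e3]; move/negP: hne; apply; apply/eqP; apply: V_ext; lia.
rewrite /sgu /delta /=.
have s1 := cfE (c1 u) (d := c1 a - c1 u) ltac:(lia).
have s2 := cfE (c2 u) (d := c2 a - c2 u) ltac:(lia).
have s3 := cfE (c3 u) (d := c3 a - c3 u) ltac:(lia).
have va := V_sum a; have vu := V_sum u.
apply/eqP.
have e1 : c1 u + (c1 a - c1 u) = c1 a by lia.
have e2 : c2 u + (c2 a - c2 u) = c2 a by lia.
have e3 : c3 u + (c3 a - c3 u) = c3 a by lia.
rewrite e1 in s1; rewrite e2 in s2; rewrite e3 in s3.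
lia.
Qed.

Lemma mem_delta n (u a : V n) : adj u a -> delta u a \in Dl.
Proof.
case/adj_coords => hne h1 h2 h3; apply: mem_Dl; apply: mem_tri; lia.
Qed.

Lemma opp_delta n (u a b : V n) : adj u a -> adj b u -> a != b -> ~~ adj a b ->
  opp (delta u a) (delta u b).
Proof.
case/adj_coords => _ h1 h2 h3; case/adj_coords => _ g1 g2 g3 hne hna.
rewrite /adj hne /= in hna.
rewrite /opp /delta /=.
case/nandP: hna => [h|]; last case/nandP => [h|h].
- apply/orP; left; apply/orP; left; apply/andP; split; apply/eqP; lia.
- apply/orP; left; apply/orP; right; apply/andP; split; apply/eqP; lia.
- apply/orP; right; apply/andP; split; apply/eqP; lia.
Qed.

Lemma sgu_Dl n (u : V n) : sgu u \in Dl.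
Proof. apply: mem_Dl; apply: mem_tri; exact: sg_tri. Qed.

Lemma card_Pairs n (u : V n) : (#|Pairs u| <= 18)%N.
Proof.
pose phi (p : V n * V n) := (delta u p.1, delta u p.2).
have hu : uniq (map phi (enum (Pairs u))).
  rewrite map_inj_uniq ?enum_uniq // => [[a b] [a' b']] h.
  have h1 := f_equal fst h; have h2 := f_equal snd h; rewrite /= in h1 h2.
  by rewrite (delta_inj h1) (delta_inj h2).
have hs : {subset map phi (enum (Pairs u)) <= GP (sgu u)}.
  move=> x /mapP [[a b]]; rewrite mem_enum => hp ->.
  case/and4P: hp => /= hua hbu hne hna.
  rewrite mem_filter; apply/andP; split.
    rewrite /phi /= good_delta // good_delta ?opp_delta //; by rewrite adj_sym.
  apply/allpairsP; exists (delta u a, delta u b); split => //=; apply: mem_delta => //; by rewrite adj_sym.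
have := uniq_leq_size hu hs; rewrite size_map -cardE => h.
apply: (leq_trans h).
have := GP_size; move/allP => /(_ _ (sgu_Dl u)); exact.
Qed.

Lemma sum_inj_le (I J : finType) (P : pred I) (Q : pred J) (h : I -> J) (F : J -> rat) :
  {in P &, injective h} -> (forall x, P x -> Q (h x)) -> (forall w, Q w -> 0 <= F w) ->
  \sum_(x | P x) F (h x) <= \sum_(w | Q w) F w.
Proof.
move=> hi hq hF.
rewrite -(big_imset _ hi) /= (bigID (fun w => w \in [set h x | x in P]) Q) /=.
apply: (@le_trans _ _ (\sum_(i | Q i && (i \in [set h x | x in P])) F i)); last first.
  rewrite lerDl; apply: sumr_ge0 => w /andP [hw _]; exact: hF.
rewrite le_eqVlt; apply/orP; left; apply/eqP/eq_bigl => w; apply/idP/idP.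
  move=> hw; rewrite hw andbT; case/imsetP: hw => x hx ->; exact: hq.
by case/andP.
Qed.

Lemma cardk m k : (k < m)%N -> #|[pred j : 'I_m.+1 | (j <= k.+1)%N]| = k.+2.
Proof.
move=> hk.
rewrite -sum1_card (eq_bigl (fun j : 'I_m.+1 => (j <= k.+1)%N)) //.
rewrite -(big_mkord (fun j => (j <= k.+1)%N) (fun _ => 1%N)).
rewrite (big_cat_nat _ (n := k.+2)) //=.
rewrite [X in (_ + X)%N]big_nat_cond [X in (_ + X)%N]big_pred0; last first.
  by move=> j; apply/negP => /andP [/andP [h1 _] h2]; move: h1; rewrite leqNgt ltnS h2.
rewrite addn0 big_nat_cond (eq_bigl (fun j => (0 <= j < k.+2)%N && true)); last first.
  by move=> j /=; rewrite ltnS andbT; case: (j <= k.+1)%N; rewrite ?andbT ?andbF.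
by rewrite -big_nat_cond sum_nat_const_nat muln1 subn0.
Qed.

Lemma reach_cone n (a : V n) (m : nat) (g : nat -> nat -> V n)
  (g00 : g 0%N 0%N = a)
  (gadj1 : forall i j, (i + j < m)%N -> adj (g i j) (g i j.+1))
  (gadj2 : forall i, (i < m)%N -> adj (g i 0%N) (g i.+1 0%N)) :
  forall i j, (i + j <= m)%N -> reach (i + j) a (g i j).
Proof.
have h0 : forall i, (i <= m)%N -> reach i a (g i 0%N).
  elim=> [|i IH] hi /=; first by rewrite g00 eqxx.
  apply: (reach_snoc (IH (ltnW hi))); exact: gadj2.
move=> i; elim=> [|j IH] hij.
  rewrite addn0; apply: h0; by rewrite addn0 in hij.
have hij' : (i + j < m)%N by rewrite addnS in hij.
rewrite addnS; apply: (reach_snoc (IH (ltnW hij'))); exact: gadj1.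
Qed.

Lemma cone_bound n (a : V n) (m : nat) (g : nat -> nat -> V n)
  (g00 : g 0%N 0%N = a)
  (gadj1 : forall i j, (i + j < m)%N -> adj (g i j) (g i j.+1))
  (gadj2 : forall i, (i < m)%N -> adj (g i 0%N) (g i.+1 0%N))
  (ginj : forall i j i' j', (i + j <= m)%N -> (i' + j' <= m)%N -> g i j = g i' j' -> i = i' /\ j = j') :
  \sum_(k < m) (k.+2)%:R / ((k.+1)%:R ^+ 2) <= \sum_(w : V n | w != a) ((dist a w)%:R : rat) ^- 2.
Proof.
have hcard : (m < #|{: V n}|)%N.
  have hinj : injective (fun i : 'I_m.+1 => g i 0%N).
    move=> i i' e; apply/val_inj.
    have hi : (i + 0 <= m)%N by rewrite addn0 -ltnS ltn_ord.
    have hi' : (i' + 0 <= m)%N by rewrite addn0 -ltnS ltn_ord.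
    by case: (ginj _ _ _ _ hi hi' e).
  by have := leq_card _ hinj; rewrite card_ord.
have hr := reach_cone g00 gadj1 gadj2.
pose h (x : 'I_m * 'I_m.+1) := g x.2 (x.1.+1 - x.2)%N.
pose P (x : 'I_m * 'I_m.+1) := (x.2 <= x.1.+1)%N.
have hP : forall x, P x -> (x.2 + (x.1.+1 - x.2) = x.1.+1)%N.
  by move=> x hx; rewrite subnKC.
have hPm : forall x, P x -> (x.2 + (x.1.+1 - x.2) <= m)%N.
  by move=> x hx; rewrite hP // ltn_ord.
have hne : forall x, P x -> h x != a.
  move=> x hx; apply/negP => /eqP e.
  rewrite /h in e; have := ginj _ _ 0%N 0%N (hPm x hx) (leq0n _); rewrite e g00 => /(_ erefl) [e1 e2].
  by move: (hP x hx); rewrite e2 e1 => /eqP.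
apply: (@le_trans _ _ (\sum_(x | P x) ((dist a (h x))%:R : rat) ^- 2)); last first.
  apply: (sum_inj_le (F := fun w => ((dist a w)%:R : rat) ^- 2)).
  - move=> x y hx hy /ginj e; case: (e (hPm x hx) (hPm y hy)) => e1 e2.
    have e3 := hP x hx; have e4 := hP y hy; rewrite e2 e1 in e3.
    move: e1 e3 e4; clear e2; case: x {hx e} => [x1 x2]; case: y {hy} => [y1 y2] /= e1 e3 e4.
    have e5 : x1 = y1 by apply: ord_inj; lia.
    by rewrite e5 (ord_inj e1).
  - by move=> x hx; exact: hne.
  - by move=> w _; rewrite invr_ge0 exprn_ge0.
apply: (@le_trans _ _ (\sum_(x | P x) ((x.1.+1)%:R : rat) ^- 2)).
  rewrite -(pair_big_dep xpredT (fun (i : 'I_m) (j : 'I_m.+1) => (j <= i.+1)%N)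
     (fun (i : 'I_m) (j : 'I_m.+1) => ((i.+1)%:R : rat) ^- 2)) /=.
  apply: ler_sum => k _; rewrite sumr_const.
  rewrite (cardk (ltn_ord k)).
  by rewrite mulr_natl.
apply: ler_sum => x hx.
have hd : (dist a (h x) <= x.1.+1)%N.
  rewrite -(hP x hx); apply: d_le; first exact: hr (hPm x hx).
  by rewrite hP //; apply: leq_ltn_trans hcard; exact: ltn_ord.
have hd0 : (0 < dist a (h x))%N by apply: d_pos; rewrite eq_sym hne.
rewrite lef_pV2 ?posrE ?exprn_gt0 ?ltr0n //.
by rewrite lerXn2r ?nnegrE ?ler0n // ler_nat.
Qed.

Definition trip := (int * int * int)%type.
Definition sa (t : trip) : int := `|t.1.1| + `|t.1.2| + `|t.2|.
Definition close (t t' : trip) : bool :=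
  [&& `|t.1.1 - t'.1.1| <= 1, `|t.1.2 - t'.1.2| <= 1 & `|t.2 - t'.2| <= 1].
Definition tv n (v : V n) : trip := (c1 v, c2 v, c3 v).
Definition mkT n (a : V n) (t : trip) : V n := mk a t.1.1 t.1.2 t.2.

Lemma tv_mkT n (a : V n) t : sa t = n%:Z -> tv (mkT a t) = t.
Proof.
case: t => [[x y] z] h; rewrite /tv /mkT /=; case: (mk_c a h) => -> -> -> //.
Qed.

Lemma tv_inj n : injective (@tv n).
Proof. move=> v w [h1 h2 h3]; exact: V_ext. Qed.

Lemma tv_sum n (v : V n) : sa (tv v) = n%:Z.
Proof. exact: V_sum. Qed.

Lemma adj_tv n (v w : V n) : tv v != tv w -> close (tv v) (tv w) -> adj v w.
Proof.
move=> hne hc; rewrite /adj; apply/andP; split.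
  by apply/negP => /eqP e; rewrite e eqxx in hne.
exact: hc.
Qed.

Definition sgn1 (x : int) : int := if x < 0 then -1 else 1.

Definition bt (y : trip) (i j : nat) : trip :=
  (y.1.1 - sgn1 y.1.1 * (i + j)%:Z, y.1.2 + sgn1 y.1.2 * i%:Z, y.2 + sgn1 y.2 * j%:Z).

Lemma bt_sum y i j : (i + j <= absz y.1.1)%N -> sa (bt y i j) = sa y.
Proof.
case: y => [[y1 y2] y3] /= h; rewrite /sa /bt /sgn1 /=.
case: (ltrP y1 0) => h1; case: (ltrP y2 0) => h2; case: (ltrP y3 0) => h3; lia.
Qed.

Lemma bt_close1 y i j : close (bt y i j) (bt y i j.+1).
Proof.
case: y => [[y1 y2] y3]; rewrite /close /bt /sgn1 /=.
case: (ltrP y1 0) => h1; case: (ltrP y2 0) => h2; case: (ltrP y3 0) => h3;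
  apply/and3P; split; lia.
Qed.

Lemma bt_close2 y i : close (bt y i 0) (bt y i.+1 0).
Proof.
case: y => [[y1 y2] y3]; rewrite /close /bt /sgn1 /=.
case: (ltrP y1 0) => h1; case: (ltrP y2 0) => h2; case: (ltrP y3 0) => h3;
  apply/and3P; split; lia.
Qed.

Lemma bt_ne1 y i j : bt y i j != bt y i j.+1.
Proof.
case: y => [[y1 y2] y3]; rewrite /bt /sgn1 /=.
case: (ltrP y3 0) => h3; apply/negP => /eqP e; have /= := f_equal snd e; lia.
Qed.

Lemma bt_ne2 y i : bt y i 0 != bt y i.+1 0.
Proof.
case: y => [[y1 y2] y3]; rewrite /bt /sgn1 /=.
case: (ltrP y2 0) => h3; apply/negP => /eqP e; have /= := f_equal (fun t : trip => t.1.2) e; lia.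
Qed.

Lemma bt_inj y i j i' j' : bt y i j = bt y i' j' -> i = i' /\ j = j'.
Proof.
case: y => [[y1 y2] y3]; rewrite /bt /sgn1 /= => [[e1 e2 e3]].
move: e2 e3; case: (ltrP y2 0) => h2; case: (ltrP y3 0) => h3 e2 e3; split; lia.
Qed.

Lemma cone_perm n (a : V n) (P : trip -> trip) (y : trip)
  (hPs : forall t, sa (P t) = sa t)
  (hPc : forall t t', close t t' -> close (P t) (P t'))
  (hPi : injective P)
  (hy : P y = tv a) :
  \sum_(k < absz y.1.1) (k.+2)%:R / ((k.+1)%:R ^+ 2) <=
  \sum_(w : V n | w != a) ((dist a w)%:R : rat) ^- 2.
Proof.
set m := absz y.1.1.
have hsy : sa y = n%:Z by rewrite -hPs hy tv_sum.
pose g i j := mkT a (P (bt y i j)).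
have hg : forall i j, (i + j <= m)%N -> tv (g i j) = P (bt y i j).
  by move=> i j hij; rewrite tv_mkT // hPs bt_sum.
apply: (cone_bound (g := g)).
- apply: tv_inj; rewrite hg // -hy; congr P.
  by case: y {hy hg m hsy g} => [[y1 y2] y3]; rewrite /bt /=; congr (_, _, _); lia.
- move=> i j hij.
  have e1 := hg i j (ltnW hij).
  have e2 : tv (g i j.+1) = P (bt y i j.+1) by apply: hg; rewrite addnS.
  apply: adj_tv; rewrite e1 e2; first by rewrite (inj_eq hPi) bt_ne1.
  exact: hPc (bt_close1 _ _ _).
- move=> i hi.
  have e1 : tv (g i 0%N) = P (bt y i 0%N) by apply: hg; rewrite addn0 ltnW.
  have e2 : tv (g i.+1 0%N) = P (bt y i.+1 0%N) by apply: hg; rewrite addn0.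
  apply: adj_tv; rewrite e1 e2; first by rewrite (inj_eq hPi) bt_ne2.
  exact: hPc (bt_close2 _ _).
- move=> i j i' j' h h' e.
  have := f_equal (@tv n) e; rewrite !hg // => /hPi; exact: bt_inj.
Qed.

Definition Tq (m : nat) : rat := \sum_(k < m) (k.+2)%:R / ((k.+1)%:R ^+ 2).
Definition Sq n (a : V n) : rat := \sum_(w : V n | w != a) ((dist a w)%:R : rat) ^- 2.

Lemma S_lower n (hn : (1 <= n)%N) (a : V n) :
  exists m, [/\ (1 <= m)%N, (n <= 3 * m)%N & Tq m <= Sq a].
Proof.
have hs := V_sum a.
set x1 := c1 a in hs *; set x2 := c2 a in hs *; set x3 := c3 a in hs *.
case: (lerP `|x2| `|x1|) => h21; case: (lerP `|x3| `|x1|) => h31.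
- exists (absz x1); split; [lia|lia|].
  apply: (cone_perm (P := id) (y := tv a)) => //.
-
  exists (absz x3); split; [lia|lia|].
  apply: (cone_perm (P := fun t : trip => (t.1.2, t.2, t.1.1)) (y := (x3, x1, x2))).
  + by case=> [[p q] r]; rewrite /sa /=; lia.
  + by case=> [[p q] r] [[p' q'] r']; rewrite /close /= => /and3P [h1 h2 h3]; apply/and3P.
  + by case=> [[p q] r] [[p' q'] r'] /= [-> -> ->].
  + by [].
- case: (lerP `|x3| `|x2|) => h32.
  + exists (absz x2); split; [lia|lia|].
    apply: (cone_perm (P := fun t : trip => (t.1.2, t.1.1, t.2)) (y := (x2, x1, x3))).
    * by case=> [[p q] r]; rewrite /sa /=; lia.
    * by case=> [[p q] r] [[p' q'] r']; rewrite /close /= => /and3P [h1 h2 h3]; apply/and3P.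
    * by case=> [[p q] r] [[p' q'] r'] /= [-> -> ->].
    * by [].
  + exists (absz x3); split; [lia|lia|].
    apply: (cone_perm (P := fun t : trip => (t.1.2, t.2, t.1.1)) (y := (x3, x1, x2))).
    * by case=> [[p q] r]; rewrite /sa /=; lia.
    * by case=> [[p q] r] [[p' q'] r']; rewrite /close /= => /and3P [h1 h2 h3]; apply/and3P.
    * by case=> [[p q] r] [[p' q'] r'] /= [-> -> ->].
    * by [].
- case: (lerP `|x3| `|x2|) => h32.
  + exists (absz x2); split; [lia|lia|].
    apply: (cone_perm (P := fun t : trip => (t.1.2, t.1.1, t.2)) (y := (x2, x1, x3))).
    * by case=> [[p q] r]; rewrite /sa /=; lia.
    * by case=> [[p q] r] [[p' q'] r']; rewrite /close /= => /and3P [h1 h2 h3]; apply/and3P.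
    * by case=> [[p q] r] [[p' q'] r'] /= [-> -> ->].
    * by [].
  + exists (absz x3); split; [lia|lia|].
    apply: (cone_perm (P := fun t : trip => (t.1.2, t.2, t.1.1)) (y := (x3, x1, x2))).
    * by case=> [[p q] r]; rewrite /sa /=; lia.
    * by case=> [[p q] r] [[p' q'] r']; rewrite /close /= => /and3P [h1 h2 h3]; apply/and3P.
    * by case=> [[p q] r] [[p' q'] r'] /= [-> -> ->].
    * by [].
Qed.

Lemma IZR_int2Z (z : int) : IZR (int2Z z) = (z%:~R : R).
Proof.
case: z => k.
- by rewrite /int2Z -INR_IZR_INZ INRE.
- have -> : int2Z (Negz k) = Z.opp (Z.of_nat k.+1) by [].
  by rewrite opp_IZR -INR_IZR_INZ INRE NegzE rmorphN.
Qed.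

Lemma rat2R_ratr q : rat2R q = ratr q.
Proof. by rewrite /rat2R !IZR_int2Z RdivE. Qed.

Lemma Tq_TR m : ratr (Tq m) = TR m.
Proof.
elim: m => [|m IH]; first by rewrite /Tq big_ord0 rmorph0.
have -> : Tq m.+1 = Tq m + (m.+2)%:R / ((m.+1)%:R ^+ 2) by rewrite /Tq big_ord_recr.
rewrite rmorphD; change (ratr (Tq m) + ratr ((m.+2)%:R / ((m.+1)%:R ^+ 2) : rat) = TR m.+1 :> R).
rewrite IH /= RplusE RdivE RmultE !INRE fmorph_div rmorphXn !rmorph_nat.
by rewrite expr2 !plusE !addn2 !addn1.
Qed.

Lemma wgt_le n (a b : V n) : a != b -> ~~ adj a b -> wgt a b <= Zc a / 4%:R.
Proof.
move=> hne hna; rewrite /wgt eq_sym (negbTE hne).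
have hd := d_ge2 hne hna.
apply: ler_wpM2l; first exact: Zc_ge0.
rewrite lef_pV2 ?posrE ?exprn_gt0 ?ltr0n //; last by apply: leq_trans hd.
rewrite (_ : 4%:R = 2%:R ^+ 2 :> rat); last by rewrite expr2 -natrM.
by rewrite lerXn2r ?nnegrE ?ler0n // ler_nat.
Qed.

From mathcomp Require Import ring.

Lemma Zc_lt n (hn : (1 <= n)%N) (a : V n) :
  (ratr (Zc a) : R) < 1 / ln (Rplus (INR n) (INR 1)).
Proof.
case: (S_lower hn a) => m [hm h3 hT].
set L := ln (Rplus (INR n) (INR 1)).
have hLm : Rle L (ln (Rplus (Rmult 3 (INR m)) 1)).
  have hle : Rle (Rplus (INR n) (INR 1)) (Rplus (Rmult 3 (INR m)) 1).
    have : Rle (INR n) (INR (3 * m)%N) by apply: le_INR; apply/ssrnat.leP.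
    rewrite mult_INR /=; lra.
  case: (Rle_lt_or_eq_dec _ _ hle) => h.
    apply: Rlt_le; apply: ln_increasing => //.
    have := pos_INR n; simpl; lra.
  by rewrite /L h; apply: Rle_refl.
have hTm := TR_ln m (ssrnat.leP hm).
have hL0 : Rlt 0 L.
  rewrite /L -ln_1; apply: ln_increasing; first lra.
  have : Rle 1 (INR n) by apply: (le_INR 1); apply/ssrnat.leP.
  simpl; lra.
have hS : Rlt L (ratr (Sq a)).
  apply: (Rlt_le_trans _ (TR m)); first lra.
  rewrite -Tq_TR; apply/RleP; by rewrite ler_rat.
have hZ : Zc a = (Sq a)^-1 by [].
rewrite hZ fmorphV /= div1r.
have hL0' : 0 < L by apply/RltP.
have hS' : L < ratr (Sq a) by apply/RltP.
rewrite ltf_pV2 ?posrE //; last exact: lt_trans hL0' hS'.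
Qed.

Lemma sum_const_le (R' : numDomainType) (T : finType) (P : pred T) (c : R') k :
  0 <= c -> (#|P| <= k)%N -> \sum_(i | P i) c <= c *+ k.
Proof.
move=> hc hk; rewrite sumr_const -(mulr_natr c #|P|) -(mulr_natr c k).
apply: ler_wpM2l; first exact: hc.
by rewrite ler_nat.
Qed.

Theorem lemma6 (n : nat) (hn : (1 <= n)%N) (u : V n) :
  Rlt (rat2R (PrE2 u)) (Rdiv (INR 9) (Rmult (INR 2) (ln (Rplus (INR n) (INR 1))))).
Proof.
set L := ln (Rplus (INR n) (INR 1)).
have hL0r : Rlt 0 L.
  rewrite /L -ln_1; apply: ln_increasing; first lra.
  have : Rle 1 (INR n) by apply: (le_INR 1); apply/ssrnat.leP.
  simpl; lra.
have hL0 : 0 < L by apply/RltP.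
apply/RltP; rewrite rat2R_ratr RdivE RmultE !INRE.
have hU := union_bound hn u.
have hpos : 0 < (9%:R : R) / (2%:R * L).
  by rewrite divr_gt0 // mulr_gt0.
apply: (le_lt_trans (y := \sum_(p | Pairs u p) ratr (wgt p.1 p.2))).
  by rewrite -rmorph_sum /= ler_rat.
apply: (le_lt_trans (y := \sum_(p | Pairs u p) ((ratr (Zc p.1) : R) / 4%:R))).
  apply: ler_sum => p /and4P [_ _ hne hna].
  have := wgt_le hne hna; rewrite -(ler_rat R) fmorph_div /= rmorph_nat; exact.
case: (boolP [exists p, Pairs u p]) => [/existsP [p0 hp0] | hno]; last first.
  rewrite big_pred0 //; move=> p; apply/negP => hp; move/negP: hno; apply.
  by apply/existsP; exists p.
apply: (lt_le_trans (y := \sum_(p | Pairs u p) ((1 / L) / 4%:R))).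
  rewrite (bigD1 p0) //= [X in _ < X](bigD1 p0) //=.
  apply: ltr_leD.
    by rewrite ltr_pM2r ?invr_gt0 ?ltr0n //; apply: Zc_lt.
  apply: ler_sum => p _; rewrite ler_pM2r ?invr_gt0 ?ltr0n //.
  by apply/ltW; apply: Zc_lt.
have hc := card_Pairs u.
have hx : 0 <= 1 / L / 4%:R :> R.
  apply: divr_ge0; [apply: divr_ge0; [exact: ler01 | exact: ltW] | exact: ler0n].
apply: (le_trans (sum_const_le hx hc)).
have hL : L != 0 by apply: lt0r_neq0.
have -> : (1 / L / 4%:R) *+ 18 = 9%:R / (2%:R * L) by rewrite -mulr_natr; field; exact: hL.
exact: lexx.
Qed.
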